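(* Let $m,n$ be natural numbers. If the $n$-th term $G(n,m)$ of the Goodstein sequence $G(m)$ is $0$, then $n=2(2n_2+1)$ for some natural number $n_2$ such that the hereditary representation of $G(n_2-1,m)$ in base $n_2$ is $2\cdot n_2^{1}+0\cdot n_2^{0}$.
   Context: For a natural number base $b>1$, the hereditary representation $m\langle b\rangle$ of $m$ is $\sum_{i=0}^{l} a_i b^{i}$ with $0\le a_i<b$, $a_l\ne0$, each exponent itself written in hereditary representation in base $b$, recursively. $m\langle b\rangle''$ is obtained by syntactically replacing every $b$ by $b+1$ in $m\langle b\rangle$. The Goodstein sequence $G(m)=\{m, m''-1, (m''-1)''-1,\dots\}$ starts from $m$ in base $2$; its $n$-th term is $G(n,m)$, with $G(1,m)=m$ in base $2$, $G(k,m)$ written in base $k+1$, and $G(k+1,m)=G(k,m)\langle k+1\rangle''-1$. *)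

(* Defs.v *)
From mathcomp Require Import all_boot.
Set Implicit Arguments. Unset Strict Implicit. Unset Printing Implicit Defensive.

(* Hereditary normal forms: [HN [:: (a_0, e_0); ...; (a_l, e_l)]] denotes
   the formal expression  a_0 * b^(e_0) + ... + a_l * b^(e_l),
   where each exponent e_i is itself such a formal expression. *)
Inductive hnf : Type := HN : seq (nat * hnf) -> hnf.

(* Evaluate a formal expression with base b.  Evaluating the hereditary
   representation in base b+1 is the syntactic replacement b |-> b+1. *)
Fixpoint heval (b : nat) (t : hnf) : nat :=
  let: HN l := t in
  (fix go (l : seq (nat * hnf)) : nat :=
     match l with
     | [::] => 0
     | (a, e) :: l' => a * b ^ (heval b e) + go l'
     end) l.

(* Base-b digits of m, little-endian (a_0, ..., a_l), with a_l <> 0;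
   empty for m = 0.  (m steps of fuel suffice for b > 1.) *)
Fixpoint digits_aux (fuel b m : nat) : seq nat :=
  match fuel with
  | 0 => [::]
  | f.+1 => if m is 0 then [::] else m %% b :: digits_aux f b (m %/ b)
  end.
Definition digits (b m : nat) : seq nat := digits_aux m b m.

(* Hereditary representation m<b> = sum_{i=0}^{l} a_i b^i, every exponent i
   (including those with a_i = 0) written hereditarily in base b. *)
Fixpoint hrep_aux (fuel b m : nat) : hnf :=
  match fuel with
  | 0 => HN [::]
  | f.+1 => HN [seq (nth 0 (digits b m) i, hrep_aux f b i)
                 | i <- iota 0 (size (digits b m))]
  end.
Definition hrep (b m : nat) : hnf := hrep_aux m.+1 b m.

Definition bump (b m : nat) : nat := heval b.+1 (hrep b m).

(* Goodstein sequence, indexed from 1: goodstein 1 m = Some m (base 2),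
   goodstein k m is written in base k+1, and
   goodstein (k+1) m = (goodstein k m)<k+1>'' - 1.
   The sequence terminates once it reaches 0: terms after a 0 term (and
   the non-existent term of index 0) are None. *)
Fixpoint goodstein (n m : nat) : option nat :=
  match n with
  | 0 => None
  | k.+1 =>
      if k is 0 then Some m
      else match goodstein k m with
           | Some x => if x == 0 then None else Some (bump k.+1 x - 1)
           | None => None
           end
  end.

(* The formal expression 2 * b^1 + 0 * b^0 (exponents in hereditary form:
   0 is the empty sum, 1 = 1 * b^0). *)
Definition two_b_plus_zero : hnf :=
  HN [:: (0, HN [::]); (2, HN [:: (1, HN [::])])].

(* Main.v *)
Require Import Defs.
From mathcomp Require Import all_boot.
From mathcomp Require Import zify.
Import Defs.
Set Implicit Arguments. Unset Strict Implicit.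

Section Aux.
Variable b : nat.
Hypothesis hb : 1 < b.

Lemma digits_aux_fuel f1 : forall f2 x, x <= f1 -> x <= f2 ->
  digits_aux f1 b x = digits_aux f2 b x.
Proof.
elim: f1 => [|f1 IH] [|f2] x h1 h2 //=.
- by have -> : x = 0 by lia.
- by have -> : x = 0 by lia.
- case: x h1 h2 => [//|x] h1 h2; congr cons; apply: IH.
  + have := ltn_Pdiv hb (ltn0Sn x); lia.
  + have := ltn_Pdiv hb (ltn0Sn x); lia.
Qed.

Lemma digitsE x : digits b x = if x is 0 then [::] else x %% b :: digits b (x %/ b).
Proof.
case: x => [//|x]; rewrite /digits /=; congr cons; apply: digits_aux_fuel => //.
have := ltn_Pdiv hb (ltn0Sn x); lia.
Qed.

Lemma size_digits x : size (digits b x) <= x.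
Proof.
elim/ltn_ind: x => x IH; rewrite digitsE; case: x IH => [//|x] IH /=.
have h := ltn_Pdiv hb (ltn0Sn x); have := IH _ h; lia.
Qed.

Lemma digits_lt x i : nth 0 (digits b x) i < b.
Proof.
elim/ltn_ind: x i => x IH i; rewrite digitsE; case: x IH => [|x] IH.
  by rewrite nth_nil; lia.
case: i => [|i] /=; first by rewrite ltn_mod; lia.
apply: IH; exact: ltn_Pdiv.
Qed.

Definition E (s : seq nat) (c : nat) := \sum_(i < size s) nth 0 s i * c ^ i.

Lemma E_nil c : E [::] c = 0.
Proof. by rewrite /E big_ord0. Qed.

Lemma E_cons d s c : E (d :: s) c = d + c * E s c.
Proof.
rewrite /E /= big_ord_recl /= expn0 muln1; congr addn.
rewrite big_distrr /=; apply: eq_bigr => i _.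
by rewrite /= expnS mulnCA.
Qed.

Lemma E_mono s c : E s c <= E s c.+1.
Proof.
elim: s => [|d s IH]; first by rewrite !E_nil.
rewrite !E_cons leq_add2l; apply: leq_mul => //.
Qed.

Lemma E_digits x : E (digits b x) b = x.
Proof.
elim/ltn_ind: x => x IH; rewrite digitsE; case: x IH => [|x] IH.
  by rewrite E_nil.
rewrite E_cons IH; last exact: ltn_Pdiv.
by rewrite mulnC addnC -divn_eq.
Qed.

Lemma hrep_aux_fuel f1 : forall f2 x, x < f1 -> x < f2 ->
  hrep_aux f1 b x = hrep_aux f2 b x.
Proof.
elim: f1 => [|f1 IH] [|f2] x h1 h2 //=.
congr HN; apply/eq_in_map => i; rewrite mem_iota => /andP[_ Hi].
have := size_digits x.
move=> hs /=; congr (_, _); apply: IH; lia.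
Qed.

Lemma heval_HN c l : heval c (HN l) = \sum_(p <- l) p.1 * c ^ heval c p.2.
Proof.
elim: l => [|[a e] l IH]; first by rewrite big_nil.
by rewrite big_cons -IH.
Qed.

Lemma bumpE x : bump b x =
  \sum_(0 <= i < size (digits b x)) nth 0 (digits b x) i * b.+1 ^ bump b i.
Proof.
rewrite {1}/bump /hrep [hrep_aux x.+1 b x]/= heval_HN big_map /index_iota subn0.
apply: eq_big_seq => i; rewrite mem_iota => /andP[_ Hi] /=.
have := size_digits x.
by move=> hs; rewrite (@hrep_aux_fuel x i.+1) //; lia.
Qed.

Lemma bump_ge x : x <= bump b x.
Proof.
elim/ltn_ind: x => x IH.
rewrite -{1}(E_digits x); apply: leq_trans (E_mono _ _) _.
rewrite bumpE big_mkord /E; apply: leq_sum => i _.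
rewrite leq_mul2l; apply/orP; right; apply: leq_pexp2l => //.
apply: IH; have := size_digits x; have := ltn_ord i; lia.
Qed.

Lemma bump_geE x : E (digits b x) b.+1 <= bump b x.
Proof.
rewrite bumpE big_mkord /E; apply: leq_sum => i _.
rewrite leq_mul2l; apply/orP; right; apply: leq_pexp2l => //.
exact: bump_ge.
Qed.

End Aux.

Lemma digits_cons b x : 1 < b -> 0 < x -> digits b x = x %% b :: digits b (x %/ b).
Proof. by move=> hb; rewrite (digitsE hb); case: x. Qed.

Lemma key b x : 1 < b -> 2*b <= x -> ~ (x = 2*b /\ 2 < b) -> 2*b+3 <= bump b x.
Proof.
move=> hb hx hn.
have x0 : 0 < x by lia.
have q0 : 0 < x %/ b by rewrite divn_gt0; lia.
have := bump_geE hb x.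
rewrite (digits_cons hb x0) (digits_cons hb q0) !E_cons.
set r := x %/ b %/ b.
have hr : r <= E (digits b r) b.+1 by rewrite -{1}(E_digits hb r) E_mono.
have e1 := divn_eq x b. have e2 := divn_eq (x %/ b) b.
have l1 : x %% b < b by rewrite ltn_mod; lia.
have l2 : x %/ b %% b < b by rewrite ltn_mod; lia.
move: hr e1 e2 l1 l2; rewrite -/r.
set R := E _ _; set d0 := x %% b; set d1 := x %/ b %% b; set q := x %/ b.
move=> hr e1 e2 l1 l2 hB.
have hx' : x = d0 + b * (d1 + b * r) by lia.
case: (posnP r) => [r0|rpos].
- rewrite r0 in hx'.
  have : d1 >= 2 by nia.
  move=> hd1.
  have : (d1 = 2 -> d0 >= 1).
    move=> hd; case: (posnP d0) => // hd0; exfalso; apply: hn; split; lia.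
  move=> hd; nia.
- nia.
Qed.

Lemma bump0 b : 1 < b -> bump b 0 = 0.
Proof. by move=> hb; rewrite (bumpE hb) (digitsE hb) /index_iota /= big_nil. Qed.

Lemma bump_lt b c : 1 < b -> c < b -> bump b c = c.
Proof.
move=> hb hc; case: (posnP c) => [->|c0]; first exact: bump0.
rewrite (bumpE hb) (digits_cons hb c0) modn_small // divn_small // (digitsE hb) /=.
by rewrite /index_iota /= big_cons big_nil bump0 // expn0 muln1 addn0.
Qed.

Lemma bump_small b c d : 1 < b -> c < b -> d < b -> bump b (c + b*d) = c + b.+1 * d.
Proof.
move=> hb hc hd; case: (posnP d) => [->|d0].
  by rewrite !muln0 !addn0 bump_lt.
have x0 : 0 < c + b * d by lia.
have hm : (c + b * d) %% b = c by rewrite addnC mulnC modnMDl modn_small.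
have hq : (c + b * d) %/ b = d by rewrite addnC mulnC divnMDl; [rewrite divn_small // addn0 | lia].
rewrite (bumpE hb) (digits_cons hb x0) hm hq (digits_cons hb d0) modn_small // divn_small //.
rewrite (digitsE hb) /= /index_iota /= !big_cons big_nil bump0 // (bump_lt hb hb).
by rewrite /= expn0 expn1 muln1 addn0 mulnC.
Qed.

Lemma hrep_2b b : 2 < b -> hrep b (2*b) = two_b_plus_zero.
Proof.
move=> hb; have hb1 : 1 < b by lia.
have x0 : 0 < 2 * b by lia.
have hd : digits b (2*b) = [:: 0; 2].
  rewrite (digits_cons hb1 x0) modnMl mulnK; last lia.
  rewrite (digits_cons hb1 (isT : 0 < 2)) modn_small // divn_small //.
rewrite /hrep [hrep_aux (2*b).+1 _ _]/= hd /=.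
have e0 : hrep_aux (2*b) b 0 = hrep_aux 1 b 0 by apply: hrep_aux_fuel; lia.
have e1 : hrep_aux (2*b) b 1 = hrep_aux 2 b 1 by apply: hrep_aux_fuel; lia.
rewrite e0 e1.
have h1 : digits b 1 = [:: 1].
  by rewrite (digits_cons hb1 (isT : 0 < 1)) modn_small // divn_small // (digitsE hb1).
by rewrite /two_b_plus_zero /= modn_small.
Qed.

Lemma gSS m j : goodstein j.+2 m = match goodstein j.+1 m with
  | Some x => if x == 0 then None else Some (bump j.+2 x - 1) | None => None end.
Proof. reflexivity. Qed.

Lemma gS m j x : 1 <= j -> goodstein j m = Some x -> x != 0 ->
  goodstein j.+1 m = Some (bump j.+1 x - 1).
Proof.
case: j => [//|j] _ H Hx.
by rewrite gSS H (negbTE Hx).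
Qed.

Lemma gNone m j : 1 <= j -> goodstein j m = Some 0 -> forall t, goodstein (j + t.+1) m = None.
Proof.
move=> hj H; elim=> [|t IH].
- rewrite addn1; case: j hj H => [//|j] _ H.
  by rewrite gSS H.
- have -> : j + t.+2 = (j + t.+1).+1 by lia.
  have : j + t.+1 = (j + t).+1 by lia.
  move: IH => /[swap] ->. move=> IH.
  by rewrite gSS IH.
Qed.

Theorem lemma7 (m n : nat) :
  4 <= m ->
  goodstein n m = Some 0 ->
  exists n2 : nat,
    n = 2 * (2 * n2 + 1) /\ 1 < n2 /\
    exists v : nat, goodstein (n2 - 1) m = Some v /\ hrep n2 v = two_b_plus_zero.
Proof.
move=> hm hn.
pose P k := exists x, goodstein k m = Some x /\ 2 * k.+1 <= x.
pose S k := 1 <= k /\ goodstein k m = Some (2 * k.+1) /\ 2 < k.+1.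
have step : forall k, 1 <= k -> P k -> S k \/ P k.+1.
  move=> k hk [x [hx hle]].
  have x0 : x != 0 by apply/eqP; lia.
  have hg := gS hk hx x0.
  case: (boolP ((x == 2 * k.+1) && (2 < k.+1))) => [/andP[/eqP e h2]|hne].
    by left; split; [|split]; rewrite -?e.
  right; exists (bump k.+1 x - 1); split => //.
  have hn' : ~ (x = 2 * k.+1 /\ 2 < k.+1).
    by case=> e h; move: hne; rewrite e h eqxx.
  have : 2 * k.+1 + 3 <= bump k.+1 x.
    by apply: key => //; lia.
  lia.
have ind : forall j, P j.+1 \/ exists k, S k /\ k < j.+1.
  elim=> [|j IH].
    by left; exists m; split => //=; lia.
  case: IH => [Pj|[k [Sk hk]]].
  - case: (step j.+1 (ltn0Sn j) Pj) => [Sj|Pj1]; last by left.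
    by right; exists j.+1; split.
  - by right; exists k; split => //; lia.
have n1 : 1 <= n by case: n hn.
have [k [[hk1 [hgk hk3]] hkn]] : exists k, S k /\ k < n.
  case: (ind n.-1); rewrite prednK //.
  case=> x [hx hle]; move: hx; rewrite hn => -[ex]; rewrite -ex in hle; lia.
have ph1 : forall t, t <= k.+1 -> goodstein (k.+1 + t) m = Some ((k.+2 + t) + (k.+1 - t)).
  elim=> [|t IH] ht.
  - rewrite addn0 (gS hk1 hgk); last by apply/eqP; lia.
    have -> : 2 * k.+1 = 0 + k.+1 * 2 by lia.
    rewrite bump_small; try lia; congr Some; lia.
  - have -> : k.+1 + t.+1 = (k.+1 + t).+1 by lia.
    have hI := IH ltac:(lia).
    rewrite (gS _ hI); [|lia|apply/eqP; lia].
    have -> : k.+2 + t + (k.+1 - t) = (k.+1 - t) + (k.+1 + t).+1 * 1 by lia.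
    rewrite bump_small; try lia; congr Some; lia.
have ph2 : forall t, t <= 2 * k + 3 -> goodstein (2 * k + 3 + t) m = Some (2 * k + 3 - t).
  elim=> [|t IH] ht.
  - have e : 2 * k + 3 + 0 = (k.+1 + k.+1).+1 by lia.
    have hI := ph1 k.+1 (leqnn _).
    rewrite e (gS _ hI); [|lia|apply/eqP; lia].
    have -> : k.+2 + k.+1 + (k.+1 - k.+1) = 0 + (k.+1 + k.+1).+1 * 1 by lia.
    rewrite bump_small; try lia; congr Some; lia.
  - have -> : 2 * k + 3 + t.+1 = (2 * k + 3 + t).+1 by lia.
    have hI := IH ltac:(lia).
    rewrite (gS _ hI); [|lia|apply/eqP; lia].
    rewrite bump_lt; try lia; congr Some; lia.
exists k.+1; split; last first.
  split; first lia.
  exists (2 * k.+1); split; first by rewrite subn1.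
  exact: hrep_2b.
case: (leqP n (k.+1 + k.+1)) => h1.
  have := ph1 (n - k.+1) ltac:(lia).
  have -> : k.+1 + (n - k.+1) = n by lia.
  rewrite hn => -[]; lia.
case: (leqP n (2 * k + 3 + (2 * k + 3))) => h2.
  have := ph2 (n - (2 * k + 3)) ltac:(lia).
  have -> : 2 * k + 3 + (n - (2 * k + 3)) = n by lia.
  rewrite hn => -[]; lia.
have h0 := ph2 (2 * k + 3) (leqnn _).
rewrite subnn in h0.
have := gNone (ltac:(lia) : 1 <= 2 * k + 3 + (2 * k + 3)) h0 (n - (2 * k + 3 + (2 * k + 3))).-1.
have -> : 2 * k + 3 + (2 * k + 3) + (n - (2 * k + 3 + (2 * k + 3))).-1.+1 = n by lia.
by rewrite hn.
Qed.
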